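(* Let $N\ge 1$ and let $L_1,\dots,L_N$ and $K_1,\dots,K_N$ be positive integers with $K_n\le L_n$ for all $n$. Among all TTM-trees for these parameters (as defined in the context), there exists one of minimum cost that is binary, i.e., in which every node has at most two children.
   Context: A TTM-tree is a finite rooted tree with a labelling satisfying: (i) the root carries the special label ''input tensor''; (ii) there are exactly $N$ leaves, and the leaves are labelled bijectively by $\{1,\dots,N\}$ (leaf labelled $n$ stands for the new factor matrix of mode $n$); (iii) every internal node (a node that is neither the root nor a leaf) is labelled by a mode in $\{1,\dots,N\}$; (iv) for each leaf labelled $n$, the path from the root to that leaf contains exactly $N-1$ internal nodes, and every mode other than $n$ appears as a label on that path. Cost: define a cardinality $c(\cdot)$ top-down by $c(\text{root})=\prod_{j=1}^N L_j$, and for an internal node $u$ with label $n$ and parent $v$, $c(u)=(K_n/L_n)\,c(v)$; the cost of such an internal node is $K_n\,c(v)$. Leaves and the root have cost $0$. The cost of the tree is the sum of the costs of its internal nodes. (This models the number of floating-point operations of computing, for each mode $n$, the product of an $L_1\times\cdots\times L_N$ tensor with the transposed $L_j\times K_j$ factor matrices along all modes $j\neq n$, reusing intermediate results along shared tree paths.) *)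

(* Defs.v *)
From mathcomp Require Import all_boot all_order all_algebra.
Set Implicit Arguments. Unset Strict Implicit. Unset Printing Implicit Defensive.
Import Order.TTheory GRing.Theory Num.Theory.

(* Modes are encoded 0-indexed: mode j (paper) is the natural number j-1 < N. *)

Inductive tnode : Type := Node of nat & seq tnode.

(* A TTM-tree is given by the list of the children of its root
   (the root carries the special label "input tensor"). *)
Definition ttm_tree := seq tnode.

(* For each leaf below a node, the pair (labels of the internal nodes on the
   path from that node (inclusive, if internal) down to the leaf (exclusive),
   label of the leaf). *)
Fixpoint leaf_paths (t : tnode) : seq (seq nat * nat) :=
  match t with
  | Node n ch =>
      if ch is [::] then [:: ([::], n)] else
      (fix go (l : seq tnode) :=
         match l with
         | [::] => [::]
         | x :: xs => map (fun pr => (n :: pr.1, pr.2)) (leaf_paths x) ++ go xs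
         end) ch
  end.

Definition ttm_paths (T : ttm_tree) : seq (seq nat * nat) :=
  flatten (map leaf_paths T).

Definition is_ttm (N : nat) (T : ttm_tree) : Prop :=
  perm_eq (map snd (ttm_paths T)) (iota 0 N) /\
  forall p n, (p, n) \in ttm_paths T ->
    [/\ size p = N.-1, all (fun m => m < N) p &
        forall m, m < N -> m != n -> m \in p].

Fixpoint node_binary (t : tnode) : bool :=
  match t with
  | Node _ ch =>
      (size ch <= 2) &&
      (fix go (l : seq tnode) :=
         match l with [::] => true | x :: xs => node_binary x && go xs end) ch
  end.

Definition is_binary (T : ttm_tree) : bool := (size T <= 2) && all node_binary T.

Local Open Scope ring_scope.

(* cost of the subtree rooted at node t, whose parent has cardinality c *)
Fixpoint node_cost (L K : nat -> nat) (c : rat) (t : tnode) : rat :=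
  match t with
  | Node n ch =>
      if ch is [::] then 0 else
      (K n)%:R * c +
      (fix go (l : seq tnode) :=
         match l with
         | [::] => 0
         | x :: xs => node_cost L K (((K n)%:R / (L n)%:R) * c) x + go xs
         end) ch
  end.

Definition ttm_cost (N : nat) (L K : nat -> nat) (T : ttm_tree) : rat :=
  \sum_(t <- T) node_cost L K (\prod_(j < N) (L j)%:R) t.

(* Main.v *)
Require Import Defs.
From mathcomp Require Import all_boot all_order all_algebra.
From mathcomp Require Import ring.
From Stdlib Require Import Classical.
From Stdlib Require List.
Import Order.TTheory GRing.Theory Num.Theory.
Set Implicit Arguments. Unset Strict Implicit. Unset Printing Implicit Defensive.
Local Open Scope ring_scope.

Definition tnode_ind2 (P : tnode -> Prop)
  (H : forall n ch, (forall x, List.In x ch -> P x) -> P (Node n ch)) : forall t, P t :=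
  fix F t := match t with Node n ch => H n ch
    ((fix G (l : seq tnode) : forall x, List.In x l -> P x :=
       match l return forall x, List.In x l -> P x with
       | [::] => fun x (hx : List.In x [::]) => False_ind _ hx
       | y :: ys => fun x hx => match hx with
                    | or_introl e => eq_ind y P (F y) x e
                    | or_intror h => G ys x h end end) ch) end.

Lemma map_In_eq (A B : Type) (f g : A -> B) (l : seq A) :
  (forall x, List.In x l -> f x = g x) -> map f l = map g l.
Proof. elim: l => //= y ys IH H; rewrite H ?IH //; [move=> x hx; apply: H|]; auto. Qed.

Lemma sum_In_le (A : Type) (f g : A -> rat) (l : seq A) :
  (forall x, List.In x l -> f x <= g x) -> \sum_(x <- l) f x <= \sum_(x <- l) g x.
Proof.
elim: l => [|y ys IH] H; first by rewrite !big_nil.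
rewrite !big_cons lerD //; first by apply: H; left.
by apply: IH => x hx; apply: H; right.
Qed.

Lemma sum_In_ge0 (A : Type) (f : A -> rat) (l : seq A) :
  (forall x, List.In x l -> 0 <= f x) -> 0 <= \sum_(x <- l) f x.
Proof.
elim: l => [|y ys IH] H; first by rewrite big_nil.
rewrite big_cons addr_ge0 //; first by apply: H; left.
by apply: IH => x hx; apply: H; right.
Qed.

Lemma lpE n ch : leaf_paths (Node n ch) =
  if ch is [::] then [:: ([::], n)] else [seq (n :: pr.1, pr.2) | pr <- ttm_paths ch].
Proof.
case: ch => [//|x xs] /=; rewrite /ttm_paths /= map_cat; congr (_ ++ _).
by elim: xs => //= y ys ->; rewrite map_cat.
Qed.

Lemma nbE n ch : node_binary (Node n ch) = (size ch <= 2)%N && all node_binary ch.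
Proof. rewrite /=; congr andb; by elim: ch => //= x xs ->. Qed.

Lemma tp_cons t F : ttm_paths (t :: F) = leaf_paths t ++ ttm_paths F.
Proof. by []. Qed.

Lemma tp_cat F G : ttm_paths (F ++ G) = ttm_paths F ++ ttm_paths G.
Proof. by rewrite /ttm_paths map_cat flatten_cat. Qed.

Lemma tp_flatten Fs : ttm_paths (flatten Fs) = flatten (map ttm_paths Fs).
Proof. by elim: Fs => //= F Fs IH; rewrite tp_cat IH. Qed.

Lemma lp_nil t : leaf_paths t != [::].
Proof.
elim/tnode_ind2: t => n [|x xs] IH; rewrite lpE //.
rewrite map_cat; have := IH x (or_introl erefl).
by case: (leaf_paths x).
Qed.

Lemma tp_nil F : nilp (ttm_paths F) = nilp F.
Proof. case: F => // t F; rewrite tp_cons; have := lp_nil t; by case: (leaf_paths t). Qed.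

Lemma In_tp y F pr : List.In y F -> pr \in leaf_paths y -> pr \in ttm_paths F.
Proof.
elim: F => //= z zs IH [<-|hy] hpr; rewrite tp_cons mem_cat ?hpr //.
by rewrite IH ?orbT.
Qed.

Fixpoint contract (m : nat) (t : tnode) : seq tnode :=
  match t with Node n ch =>
    if ch is [::] then [:: t] else
    if n == m then flatten (map (contract m) ch)
    else [:: Node n (flatten (map (contract m) ch))] end.

Definition gm (m : nat) (pr : seq nat * nat) := ([seq x <- pr.1 | predC1 m x], pr.2).

Lemma contract_paths m t :
  ttm_paths (contract m t) = map (gm m) (leaf_paths t).
Proof.
elim/tnode_ind2: t => n [|x xs] IH; first by [].
have E : ttm_paths (flatten (map (contract m) (x :: xs))) =
         map (gm m) (ttm_paths (x :: xs)).
  rewrite tp_flatten -map_comp (map_In_eq (g := fun y => map (gm m) (leaf_paths y))) //.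
  by rewrite /ttm_paths map_flatten -map_comp.
have ne : nilp (flatten (map (contract m) (x :: xs))) = false.
  by rewrite -tp_nil E /nilp size_map -/(nilp _) tp_nil.
rewrite lpE -map_comp.
have -> : contract m (Node n (x::xs)) = if n == m then flatten (map (contract m) (x::xs))
   else [:: Node n (flatten (map (contract m) (x::xs)))] by [].
move: ne E; set F := flatten _ => ne E.
case: eqP => [->|/eqP nm].
  by rewrite E; apply: eq_map => -[p k] /=; rewrite /gm /= eqxx.
rewrite tp_cons cats0 lpE.
move: ne E; case: F => [|y ys] // _ E.
rewrite E -map_comp; apply: eq_map => -[p k]; by rewrite /gm /= nm.
Qed.

Lemma mem_lp n ch pr : pr \in ttm_paths ch -> (n :: pr.1, pr.2) \in leaf_paths (Node n ch).
Proof.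
case: ch => [//|x xs] h; rewrite lpE; exact: (map_f (fun pr => (n :: pr.1, pr.2)) h).
Qed.

Lemma lp_ex t : exists pr, pr \in leaf_paths t.
Proof. have := lp_nil t; case: (leaf_paths t) => [|pr ?] // _; exists pr; exact: mem_head. Qed.

Lemma tp_ex x xs : exists pr, pr \in ttm_paths (x :: xs).
Proof. have [pr h] := lp_ex x; exists pr; by rewrite tp_cons mem_cat h. Qed.

Lemma contract_id m t : (forall pr, pr \in leaf_paths t -> m \notin pr.1) -> contract m t = [:: t].
Proof.
elim/tnode_ind2: t => n [|x xs] IH H //.
have nm : n != m.
  have [pr hpr] := tp_ex x xs.
  have := H _ (mem_lp n hpr).
  by rewrite inE negb_or eq_sym => /andP[].
have -> : contract m (Node n (x::xs)) = if n == m then flatten (map (contract m) (x::xs))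
   else [:: Node n (flatten (map (contract m) (x::xs)))] by [].
rewrite (negbTE nm); congr [:: Node n _].
rewrite (map_In_eq (g := fun y => [:: y])) ?flatten_map1 ?map_id // => y hy.
apply: IH => // pr hpr; have := H _ (mem_lp n (In_tp hy hpr)).
by rewrite inE negb_or => /andP[].
Qed.

Definition V (R : seq nat) (F : seq tnode) := all (fun pr => perm_eq (pr.2 :: pr.1) R) (ttm_paths F).
Definition VT (R : seq nat) (t : tnode) := all (fun pr => perm_eq (pr.2 :: pr.1) R) (leaf_paths t).
Definition fleaves F := map snd (ttm_paths F).
Definition tleaves t := map snd (leaf_paths t).

Lemma V_cons R t F : V R (t :: F) = VT R t && V R F.
Proof. by rewrite /V tp_cons all_cat. Qed.
Lemma V_cat R F G : V R (F ++ G) = V R F && V R G.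
Proof. by rewrite /V tp_cat all_cat. Qed.
Lemma fleaves_cons t F : fleaves (t :: F) = tleaves t ++ fleaves F.
Proof. by rewrite /fleaves tp_cons map_cat. Qed.
Lemma fleaves_cat F G : fleaves (F ++ G) = fleaves F ++ fleaves G.
Proof. by rewrite /fleaves tp_cat map_cat. Qed.
Lemma tleaves_node m x xs : tleaves (Node m (x :: xs)) = fleaves (x :: xs).
Proof. by rewrite /tleaves lpE -map_comp. Qed.

Lemma swap_perm (n m : nat) p : perm_eq (n :: m :: p) (m :: n :: p).
Proof. by have := perm_catCA [:: n] [:: m] p (m :: n :: p); rewrite /= perm_refl. Qed.

Lemma cons_rem (m : nat) s R : m \in R -> perm_eq (m :: s) R = perm_eq s (rem m R).
Proof. move=> hm; by rewrite (permPr (perm_to_rem hm)) perm_cons. Qed.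

Lemma VT_node R m x xs : VT R (Node m (x :: xs)) = (m \in R) && V (rem m R) (x :: xs).
Proof.
have [pr hpr] := tp_ex x xs.
rewrite /VT lpE all_map /V.
case hm: (m \in R) => /=.
  by apply: eq_all => -[p n] /=; rewrite (permPl (swap_perm _ _ _)) cons_rem.
apply/negbTE/negP => /allP /(_ _ hpr) /= /perm_mem /(_ m).
by rewrite !inE eqxx orbT hm.
Qed.

Lemma VT_uniq R t pr : uniq R -> VT R t -> pr \in leaf_paths t -> uniq (pr.2 :: pr.1).
Proof. by move=> uR /allP h /h /perm_uniq ->. Qed.

Lemma VT_leaf R m : VT R (Node m [::]) = perm_eq [:: m] R.
Proof. by rewrite /VT /= andbT. Qed.

Section Cost.
Variables (L K : nat -> nat).
Local Notation ncost := (node_cost L K).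
Definition rho n : rat := (K n)%:R / (L n)%:R.
Definition fcost c (F : seq tnode) := \sum_(t <- F) ncost c t.

Lemma rho_ge0 n : 0 <= rho n.
Proof. by rewrite /rho divr_ge0. Qed.

Lemma ncE c n ch : ncost c (Node n ch) =
  if ch is [::] then 0 else (K n)%:R * c + fcost (rho n * c) ch.
Proof.
case: ch => [//|x xs] /=; rewrite /fcost big_cons; congr (_ + (_ + _)).
by elim: xs => [|y ys IH] /=; rewrite ?big_nil ?big_cons ?IH.
Qed.

Lemma ncost_ge0 c t : 0 <= c -> 0 <= ncost c t.
Proof.
elim/tnode_ind2: t c => n ch IH c hc; rewrite ncE; case: ch IH => // x xs IH.
rewrite addr_ge0 ?mulr_ge0 // /fcost.
apply: sum_In_ge0 => y hy; apply: IH => //; exact: mulr_ge0 (rho_ge0 _) hc.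
Qed.
Lemma fcost_flatten c Fs : fcost c (flatten Fs) = \sum_(F <- Fs) fcost c F.
Proof. by rewrite /fcost big_flatten. Qed.

Lemma fcost_cons c t F : fcost c (t :: F) = ncost c t + fcost c F.
Proof. by rewrite /fcost big_cons. Qed.

Lemma fcost_cat c F G : fcost c (F ++ G) = fcost c F + fcost c G.
Proof. by rewrite /fcost big_cat. Qed.

Lemma fcost_ge0 c F : 0 <= c -> 0 <= fcost c F.
Proof. by move=> hc; rewrite /fcost sumr_ge0 // => t _; apply: ncost_ge0. Qed.

Lemma contract_cost m t c : 0 <= c -> rho m <= 1 ->
  (forall pr, pr \in leaf_paths t -> uniq pr.1) ->
  fcost (rho m * c) (contract m t) <= ncost c t.
Proof.
elim/tnode_ind2: t c => n [|x xs] IH c hc hm hu.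
  by rewrite /= fcost_cons /fcost big_nil addr0.
have -> : contract m (Node n (x::xs)) = if n == m then flatten (map (contract m) (x::xs))
   else [:: Node n (flatten (map (contract m) (x::xs)))] by [].
rewrite [ncost c _]ncE.
case: (eqVneq n m) => [<-|nm].
  rewrite (map_In_eq (g := fun y => [:: y])) ?flatten_map1 ?map_id.
    by rewrite lerDr mulr_ge0.
  move=> y hy; apply: contract_id => pr hpr.
  by have /andP[] := hu _ (mem_lp n (In_tp hy hpr)).
rewrite fcost_cons /fcost big_nil addr0 ncE.
case e: (flatten _) => [|z zs].
  by rewrite addr_ge0 // ?mulr_ge0 // fcost_ge0 // mulr_ge0 // rho_ge0.
rewrite -e fcost_flatten big_map lerD //.
  by rewrite ler_wpM2l // ler_piMl.
rewrite /fcost; apply: sum_In_le => y hy.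
rewrite mulrCA; apply: IH => //; first exact: mulr_ge0 (rho_ge0 _) hc.
move=> pr hpr; by have /andP[] := hu _ (mem_lp n (In_tp hy hpr)).
Qed.
Lemma merge2 R m x xs tj c : uniq R -> rho m <= 1 -> 0 <= c ->
  VT R (Node m (x :: xs)) -> VT R tj -> m \notin tleaves tj ->
  [/\ VT R (Node m ((x :: xs) ++ contract m tj)),
      tleaves (Node m ((x :: xs) ++ contract m tj)) = tleaves (Node m (x :: xs)) ++ tleaves tj &
      ncost c (Node m ((x :: xs) ++ contract m tj)) <= ncost c (Node m (x :: xs)) + ncost c tj].
Proof.
move=> uR hm hc h1 hj nmj.
have mR : m \in R by move: h1; rewrite VT_node => /andP[].
split.
- rewrite /VT lpE tp_cat contract_paths map_cat all_cat.
  apply/andP; split; first by move: h1; rewrite /VT lpE.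
  apply/allP => pr0 /mapP [pr1 /mapP [[p n] hpn ->] ->] /=.
  have pe : perm_eq (n :: p) R by move/allP: hj => /(_ _ hpn).
  have nn : n != m.
    apply: contraNneq nmj => <-; exact: (map_f snd hpn).
  have mp : m \in p.
    by move: (perm_mem pe m); rewrite mR inE eq_sym (negbTE nn).
  have up : uniq p by have := VT_uniq uR hj hpn; rewrite /= => /andP[].
  apply: perm_trans pe; rewrite perm_cons perm_sym -rem_filter //; exact: perm_to_rem.
- rewrite /tleaves !lpE tp_cat contract_paths !map_cat -!map_comp; congr (_ ++ _).
- rewrite !ncE fcost_cat /= -addrA lerD2l lerD2l.
  have := contract_cost (t := tj) hc hm; apply => pr hpr.
  by have /andP[] := VT_uniq uR hj hpr.
Qed.

Lemma mergeA R F c : uniq R -> (forall m, m \in R -> rho m <= 1) -> 0 <= c ->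
  V R F -> uniq (fleaves F) -> (3 <= size F)%N ->
  exists F', [/\ V R F', perm_eq (fleaves F') (fleaves F), (size F' < size F)%N &
                 fcost c F' <= fcost c F].
Proof.
move=> uR hR hc.
case: F => [|t1 [|t2 [|t3 rest]]] // hV hu _.
move: hV hu; rewrite !V_cons !fleaves_cons => /and4P[v1 v2 v3 vr] hu.
case: t1 v1 hu => m [|x xs] v1 hu.
  exfalso; have [pr hpr] := lp_ex t2.
  have pe : perm_eq (pr.2 :: pr.1) [:: m].
    by apply: perm_trans (_ : perm_eq R [:: m]); [move/allP: v2 => /(_ _ hpr) | rewrite perm_sym -VT_leaf].
  have : pr.2 \in [:: m] by rewrite -(perm_mem pe) mem_head.
  rewrite inE => /eqP e.
  move: hu; rewrite cat_uniq => /and3P[_ /negP H _]; apply: H; apply/hasP.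
  exists pr.2; first by rewrite mem_cat /tleaves map_f.
  by rewrite /tleaves /= e mem_head.
have mR : m \in R by move: v1; rewrite VT_node => /andP[].
have hm := hR m mR.
have [hm2|nm2] := boolP (m \in tleaves t2).
  have nm3 : m \notin tleaves t3.
    move: hu; rewrite tleaves_node !cat_uniq => /and3P[_ _ /and3P[_ + _]].
    apply: contraNN => h3; apply/hasP; exists m => //; by rewrite mem_cat h3.
  have [va [la ca]] := merge2 (c:=c) uR hm hc v1 v3 nm3.
  exists (Node m ((x :: xs) ++ contract m t3) :: t2 :: rest); split => //.
  - by rewrite !V_cons va v2 vr.
  - rewrite !fleaves_cons la -catA perm_cat2l; apply/permPl; exact: perm_catCA.
  - rewrite !fcost_cons; apply: le_trans (lerD ca (lexx _)) _.
    rewrite le_eqVlt; apply/orP; left; apply/eqP; ring.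
have [va [la ca]] := merge2 (c:=c) uR hm hc v1 v2 nm2.
exists (Node m ((x :: xs) ++ contract m t2) :: t3 :: rest); split => //.
- by rewrite !V_cons va v3 vr.
- by rewrite !fleaves_cons la -catA.
- by rewrite !fcost_cons [in X in _ <= X]addrA lerD2r.
Qed.
Lemma reduceA R c : uniq R -> (forall m, m \in R -> rho m <= 1) -> 0 <= c ->
  forall F, V R F -> uniq (fleaves F) ->
  exists F', [/\ V R F', perm_eq (fleaves F') (fleaves F), (size F' <= 2)%N &
                 fcost c F' <= fcost c F].
Proof.
move=> uR hR hc F.
have [k] := ubnP (size F); elim: k F => [|k IH] F // hs hV hu.
have [le2|gt2] := leqP (size F) 2; first by exists F; split.
have [F1 [v1 p1 s1 c1]] := mergeA uR hR hc hV hu gt2.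
have u1 : uniq (fleaves F1) by rewrite (perm_uniq p1).
have [F2 [v2 p2 s2 c2]] := IH F1 (leq_trans s1 (hs)) v1 u1.
exists F2; split => //; [exact: perm_trans p2 p1 | exact: le_trans c2 c1].
Qed.

Definition Bin R := forall F c, 0 <= c -> V R F -> uniq (fleaves F) ->
  exists F', [/\ V R F', perm_eq (fleaves F') (fleaves F), is_binary F' &
                 fcost c F' <= fcost c F].

Lemma fleaves_nil F : nilp (fleaves F) = nilp F.
Proof. by rewrite /fleaves /nilp size_map -/(nilp _) tp_nil. Qed.

Lemma tree_bin R : (forall m, m \in R -> Bin (rem m R)) ->
  forall t c, 0 <= c -> VT R t -> uniq (tleaves t) ->
  exists t', [/\ VT R t', perm_eq (tleaves t') (tleaves t), node_binary t' &
                 ncost c t' <= ncost c t].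
Proof.
move=> IH [m [|x xs]] c hc hv hu; first by exists (Node m [::]).
move: hv; rewrite VT_node => /andP[mR hv].
rewrite tleaves_node in hu.
have [ch' [v' p' b' c']] := IH m mR (x :: xs) (rho m * c) (mulr_ge0 (rho_ge0 _) hc) hv hu.
case: ch' v' p' b' c' => [|y ys] v' p' b' c'.
  have h := perm_size p'; have := fleaves_nil (x :: xs); by rewrite /nilp -h.
exists (Node m (y :: ys)); split.
- by rewrite VT_node mR.
- by rewrite !tleaves_node.
- by rewrite nbE.
- by rewrite !ncE lerD2l.
Qed.

Lemma forest_bin R c : (forall m, m \in R -> Bin (rem m R)) -> 0 <= c ->
  forall F, V R F -> uniq (fleaves F) ->
  exists F', [/\ V R F', perm_eq (fleaves F') (fleaves F), size F' = size F,
                 all node_binary F' & fcost c F' <= fcost c F].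
Proof.
move=> IH hc; elim => [|t F IHF]; first by exists [::].
rewrite V_cons fleaves_cons cat_uniq => /andP[vt vF] /and3P[ut _ uF].
have [t' [v1 p1 b1 c1]] := tree_bin IH hc vt ut.
have [F' [v2 p2 s2 b2 c2]] := IHF vF uF.
exists (t' :: F'); split => /=.
- by rewrite V_cons v1 v2.
- by rewrite !fleaves_cons perm_cat.
- by rewrite s2.
- by rewrite b1 b2.
- by rewrite !fcost_cons lerD.
Qed.

Lemma stepBin R : uniq R -> (forall m, m \in R -> rho m <= 1) ->
  (forall m, m \in R -> Bin (rem m R)) -> Bin R.
Proof.
move=> uR hR IH F c hc hV hu.
have [F1 [v1 p1 s1 c1]] := reduceA uR hR hc hV hu.
have u1 : uniq (fleaves F1) by rewrite (perm_uniq p1).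
have [F2 [v2 p2 s2 b2 c2]] := forest_bin IH hc v1 u1.
exists F2; split.
- by [].
- exact: perm_trans p2 p1.
- by rewrite /is_binary s2 s1 b2.
- exact: le_trans c2 c1.
Qed.

Lemma allBin k R : (size R <= k)%N -> uniq R -> (forall m, m \in R -> rho m <= 1) -> Bin R.
Proof.
elim: k R => [|k IH] R hs uR hR; apply: stepBin => // m mR.
  by move: hs; rewrite leqn0 => /nilP hR0; rewrite hR0 in mR.
apply: IH.
- by rewrite size_rem // -subn1 leq_subLR add1n.
- exact: rem_uniq.
- move=> m' /mem_rem; exact: hR.
Qed.
Lemma V_In R F y : V R F -> List.In y F -> VT R y.
Proof.
elim: F => //= z zs IH; rewrite V_cons => /andP[h1 h2] [<-|hy] //; exact: IH.
Qed.

Lemma sum_nat (A : Type) (f : A -> rat) (l : seq A) :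
  (forall y, List.In y l -> exists k : nat, f y = k%:R) ->
  exists k : nat, \sum_(y <- l) f y = k%:R.
Proof.
elim: l => [|y ys IH] H; first by exists 0%N; rewrite big_nil.
have [k1 e1] := H y (or_introl erefl).
have [k2 e2] := IH (fun z hz => H z (or_intror hz)).
by exists (k1 + k2)%N; rewrite big_cons e1 e2 natrD.
Qed.

Lemma int_cost t : forall R X, (forall m, m \in R -> 0 < L m)%N -> VT R t ->
  exists k : nat, ncost ((X * \prod_(j <- R) L j)%N%:R) t = k%:R.
Proof.
elim/tnode_ind2: t => m [|x xs] IH R X hL hv; first by exists 0%N.
move: hv; rewrite VT_node => /andP[mR hv].
rewrite ncE.
have e : rho m * (X * \prod_(j <- R) L j)%N%:R = (X * K m * \prod_(j <- rem m R) L j)%N%:R.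
  rewrite (perm_big _ (perm_to_rem mR)) big_cons /= /rho !natrM.
  have := hL m mR; rewrite -(ltr0n rat) => hl.
  field; by rewrite lt0r_neq0.
rewrite e /fcost.
have [k e2] := sum_nat (l := x :: xs) (f := fun y => ncost ((X * K m * \prod_(j <- rem m R) L j)%N%:R) y)
   (fun y hy => IH y hy (rem m R) (X * K m)%N (fun m' h => hL m' (mem_rem h)) (V_In hv hy)).
by exists (K m * (X * \prod_(j <- R) L j) + k)%N; rewrite natrD -e2 [(K m * _)%:R]natrM.
Qed.

Lemma int_fcost F R X : (forall m, m \in R -> 0 < L m)%N -> V R F ->
  exists k : nat, fcost ((X * \prod_(j <- R) L j)%N%:R) F = k%:R.
Proof.
move=> hL hV; apply: sum_nat => y hy; exact: int_cost hL (V_In hV hy).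
Qed.
End Cost.

Fixpoint chain (s : seq nat) (n : nat) : tnode :=
  match s with [::] => Node n [::] | m :: s' => Node m [:: chain s' n] end.

Lemma chain_lp s n : leaf_paths (chain s n) = [:: (s, n)].
Proof. elim: s => // m s IH; by rewrite [chain _ _]/= lpE tp_cons IH. Qed.

Lemma exists_ttm N : exists T, V (iota 0 N) T /\ perm_eq (fleaves T) (iota 0 N).
Proof.
set R0 := iota 0 N.
have E : forall s, ttm_paths (map (fun n => chain (rem n R0) n) s) = map (fun n => (rem n R0, n)) s.
  by elim => //= a s IH; rewrite tp_cons chain_lp IH.
exists (map (fun n => chain (rem n R0) n) R0); split.
- rewrite /V E all_map; apply/allP => n hn /=; rewrite perm_sym; exact: perm_to_rem.
- by rewrite /fleaves E -map_comp map_id.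
Qed.

Lemma ttm_V N T : (1 <= N)%N -> is_ttm N T -> V (iota 0 N) T /\ perm_eq (fleaves T) (iota 0 N).
Proof.
move=> hN [hp H]; split => //.
apply/allP => -[p n] hpn /=.
have [sz alp cov] := H p n hpn.
have nN : (n < N)%N.
  have : n \in map snd (ttm_paths T) by exact: (map_f snd hpn).
  by rewrite (perm_mem hp) mem_iota.
have sub : {subset iota 0 N <= n :: p}.
  move=> m; rewrite mem_iota add0n /= inE => hm.
  by case: eqP => //= /eqP ne; apply: cov.
have hs : (size (n :: p) <= size (iota 0 N))%N by rewrite /= sz size_iota prednK.
have [es ei] := uniq_min_size (iota_uniq 0 N) sub hs.
have un : uniq (n :: p) by rewrite (uniq_size_uniq (iota_uniq 0 N) ei) es.
apply: uniq_perm => //; first exact: iota_uniq.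
Qed.

Lemma V_ttm N T : V (iota 0 N) T -> perm_eq (fleaves T) (iota 0 N) -> is_ttm N T.
Proof.
move=> hV hp; split => // p n hpn.
have pe : perm_eq (n :: p) (iota 0 N) by move/allP: hV => /(_ _ hpn).
split.
- by have := perm_size pe; rewrite size_iota /= => <-.
- by apply/allP => m hm; have := perm_mem pe m; rewrite inE hm orbT mem_iota => /esym.
- move=> m hm ne; have := perm_mem pe m; rewrite mem_iota hm inE (negbTE ne) /=.
  by move=> ->.
Qed.

Lemma nat_min (Q : nat -> Prop) k : Q k -> exists k0, Q k0 /\ forall j, Q j -> (k0 <= j)%N.
Proof.
elim/ltn_ind: k => k IH Qk.
case: (classic (exists j, (j < k)%N /\ Q j)) => [[j [ljk Qj]] | H].
  exact: IH j ljk Qj.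
exists k; split => // j Qj; rewrite leqNgt; apply/negP => ljk; apply: H; by exists j.
Qed.

Theorem lemma1 (N : nat) (L K : nat -> nat) :
  (1 <= N)%N ->
  (forall n, (n < N)%N -> (0 < K n)%N /\ (K n <= L n)%N) ->
  exists T : ttm_tree,
    [/\ is_ttm N T, is_binary T &
        forall T' : ttm_tree, is_ttm N T' -> ttm_cost N L K T <= ttm_cost N L K T'].
Proof.
move=> hN hK.
set R0 := iota 0 N.
have uR : uniq R0 by apply: iota_uniq.
have hL : forall m, m \in R0 -> (0 < L m)%N.
  move=> m; rewrite mem_iota add0n => /hK [h1 h2]; exact: leq_trans h1 h2.
have hR : forall m, m \in R0 -> rho L K m <= 1.
  move=> m hm; have := hL m hm; rewrite -(ltr0n rat) => hl.
  rewrite /rho ler_pdivrMr // mul1r ler_nat.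
  by move: hm; rewrite mem_iota add0n => /hK [].
have B := allBin (leqnn _) uR hR.
have eP : \prod_(j < N) (L j)%:R = ((1 * \prod_(j <- R0) L j)%N%:R : rat).
  by rewrite mul1n natr_prod /R0 -(subn0 N) -/(index_iota 0 N) big_mkord subn0.
have ec : forall T, ttm_cost N L K T = fcost L K ((1 * \prod_(j <- R0) L j)%N%:R) T.
  by move=> T; rewrite /ttm_cost eP.
pose Q k := exists T, is_ttm N T /\ ttm_cost N L K T = k%:R.
have [T0 [v0 p0]] := exists_ttm N.
have [k Qk] : exists k, Q k.
  have [k ek] := int_fcost K 1 hL v0.
  by exists k, T0; split; [exact: V_ttm | rewrite ec].
have [k0 [[T1 [t1 e1]] hmin]] := nat_min Qk.
have [v1 p1] := ttm_V hN t1.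
have u1 : uniq (fleaves T1) by rewrite (perm_uniq p1).
have hc : 0 <= ((1 * \prod_(j <- R0) L j)%N%:R : rat) by apply: ler0n.
have [T2 [v2 p2 b2 c2]] := B T1 _ hc v1 u1.
exists T2; split => //.
- by apply: V_ttm => //; exact: perm_trans p2 p1.
- move=> T' hT'.
  have [v' p'] := ttm_V hN hT'.
  have [j ej] := int_fcost K 1 hL v'.
  have Qj : Q j by exists T'; split => //; rewrite ec.
  rewrite !ec ej; apply: le_trans c2 _; rewrite -ec e1 ler_nat; exact: hmin.
Qed.
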